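(* Fix a positive $\epsilon\in\Gamma$. Let $d_0\in\mathrm{Der}_0(\mathfrak{L},\mathfrak{V})$ satisfy $d_0(L_\epsilon)=0$. Then $d_0(L_{-\epsilon})=0$.
   Context: Let $\Gamma$ be a nontrivial additive subgroup of $\mathbb{R}$, and let $s\in\mathbb{R}$ with $2s\in\Gamma$. The Lie superalgebra $\mathfrak{L}$ over $\mathbb{C}$ has basis $\{L_p,I_p,G_r,H_r\mid p\in\Gamma,\ r\in s+\Gamma\}$. Here $L_p,I_p$ are even and $G_r,H_r$ are odd. The nonzero super-brackets are $[L_p,L_q]=(p-q)L_{p+q}$, $[L_p,I_q]=(p-q)I_{p+q}$, $[L_p,G_r]=(\tfrac p2-r)G_{p+r}$, $[L_p,H_r]=(\tfrac p2-r)H_{p+r}$, $[G_r,G_t]=I_{r+t}$, $[I_p,G_r]=(p-2r)H_{p+r}$. All other brackets of basis elements vanish, apart from those forced by super-antisymmetry. Grading: - $\mathbb{Z}_s=\Gamma\cup(s+\Gamma)$, an additive subgroup of $\mathbb{R}$. - $\mathfrak{L}=\bigoplus_{p\in\mathbb{Z}_s}\mathfrak{L}_p$, where $\mathfrak{L}_p$ is spanned by those of $L_p,I_p,G_p,H_p$ that exist. - $\mathfrak{V}=\mathfrak{L}\otimes\mathfrak{L}$, with $\mathfrak{V}_r=\bigoplus_{p+q=r}\mathfrak{L}_p\otimes\mathfrak{L}_q$. - $\mathfrak{L}$ acts on $\mathfrak{V}$ by $x\circ(a\otimes b)=[x,a]\otimes b+(-1)^{[x][a]}a\otimes[x,b]$,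 where $[x]$ is parity. Derivations: - A homogeneous derivation of parity $[d]$ is a linear map $d:\mathfrak{L}\to\mathfrak{V}$ shifting parity by $[d]$ and satisfying $d([x,y])=(-1)^{[d][x]}x\circ d(y)-(-1)^{[y]([d]+[x])}y\circ d(x)$. - A derivation is a sum of an even and an odd one. - $\mathrm{Der}_0(\mathfrak{L},\mathfrak{V})$ is the set of derivations $d$ with $d(\mathfrak{L}_p)\subset\mathfrak{V}_{p}$ for all $p\in\mathbb{Z}_s$. *)

(* Defs.v *)
From Stdlib Require Import Reals List.
Open Scope R_scope.

Record C := mkC { re : R ; im : R }.
Definition C0 : C := mkC 0 0.
Definition C1 : C := mkC 1 0.
Definition RtoC (x : R) : C := mkC x 0.
Definition Cadd (a b : C) : C := mkC (re a + re b) (im a + im b).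
Definition Cmul (a b : C) : C :=
  mkC (re a * re b - im a * im b) (re a * im b + im a * re b).
Definition Copp (a : C) : C := mkC (- re a) (- im a).
Definition Csign (b : bool) : C := if b then RtoC (-1) else C1.

(** * The basis of the Lie superalgebra L *)
Inductive kind := KL | KI | KG | KH.
Record B := mkB { bk : kind ; bx : R }.

Definition kind_eq_dec (k1 k2 : kind) : {k1 = k2} + {k1 <> k2}.
Proof. decide equality. Defined.
Definition B_eq_dec (a b : B) : {a = b} + {a <> b}.
Proof. decide equality; [apply Req_EM_T | apply kind_eq_dec]. Defined.
Definition BB_eq_dec (a b : B * B) : {a = b} + {a <> b}.
Proof. decide equality; apply B_eq_dec. Defined.

Definition par (b : B) : bool :=
  match bk b with KL | KI => false | KG | KH => true end.

(** [valid Gam s b]: b is one of L_p, I_p (p in Gamma), G_r, H_r (r in s+Gamma) *)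
Definition valid (Gam : R -> Prop) (s : R) (b : B) : Prop :=
  match bk b with KL | KI => Gam (bx b) | KG | KH => Gam (bx b - s) end.

Definition Fs (T : Type) := list (C * T).

Definition coef {T : Type} (dec : forall a b : T, {a = b} + {a <> b})
  (v : Fs T) (t : T) : C :=
  fold_right (fun ct acc => if dec (snd ct) t then Cadd (fst ct) acc else acc) C0 v.

Definition scale {T : Type} (c : C) (v : Fs T) : Fs T :=
  map (fun ct => (Cmul c (fst ct), snd ct)) v.

(** Elements of L and of V = L (x) L *)
Definition VecL := Fs B.
Definition VecV := Fs (B * B).

Definition coefL := coef B_eq_dec.
Definition coefV := coef BB_eq_dec.

Definition tensor (u w : VecL) : VecV :=
  flat_map (fun ca => map (fun cb => (Cmul (fst ca) (fst cb), (snd ca, snd cb))) w) u.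

(** The super-bracket of two basis elements (super-antisymmetry built in) *)
Definition br (x y : B) : VecL :=
  let p := bx x in let q := bx y in
  match bk x, bk y with
  | KL, KL => (RtoC (p - q), mkB KL (p + q)) :: nil
  | KL, KI => (RtoC (p - q), mkB KI (p + q)) :: nil
  | KI, KL => (RtoC (- (q - p)), mkB KI (q + p)) :: nil
  | KL, KG => (RtoC (p / 2 - q), mkB KG (p + q)) :: nil
  | KG, KL => (RtoC (- (q / 2 - p)), mkB KG (q + p)) :: nil
  | KL, KH => (RtoC (p / 2 - q), mkB KH (p + q)) :: nil
  | KH, KL => (RtoC (- (q / 2 - p)), mkB KH (q + p)) :: nil
  | KG, KG => (C1, mkB KI (p + q)) :: nil
  | KI, KG => (RtoC (p - 2 * q), mkB KH (p + q)) :: nil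
  | KG, KI => (RtoC (- (q - 2 * p)), mkB KH (q + p)) :: nil
  | _, _ => nil
  end.

Definition act (x : B) (v : VecV) : VecV :=
  flat_map (fun ct =>
    let a := fst (snd ct) in let b := snd (snd ct) in
    scale (fst ct)
      (tensor (br x a) ((C1, b) :: nil) ++
       scale (Csign (par x && par a)) (tensor ((C1, a) :: nil) (br x b)))) v.

Definition ext (d : B -> VecV) (v : VecL) : VecV :=
  flat_map (fun ct => scale (fst ct) (d (snd ct))) v.

Definition maps_into_V (Gam : R -> Prop) (s : R) (d : B -> VecV) : Prop :=
  forall b, valid Gam s b -> forall u w,
    coefV (d b) (u, w) <> C0 -> valid Gam s u /\ valid Gam s w.

Definition hom_derivation (Gam : R -> Prop) (s : R) (pd : bool) (d : B -> VecV) : Prop :=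
  maps_into_V Gam s d /\
  (forall b, valid Gam s b -> forall u w,
     coefV (d b) (u, w) <> C0 -> xorb (par u) (par w) = xorb (par b) pd) /\
  (forall x y, valid Gam s x -> valid Gam s y -> forall t,
     coefV (ext d (br x y)) t =
     coefV (scale (Csign (pd && par x)) (act x (d y)) ++
            scale (Copp (Csign (par y && xorb pd (par x)))) (act y (d x))) t).

Definition derivation (Gam : R -> Prop) (s : R) (d : B -> VecV) : Prop :=
  exists d0 d1, hom_derivation Gam s false d0 /\ hom_derivation Gam s true d1 /\
    forall b, valid Gam s b -> forall t,
      coefV (d b) t = coefV (d0 b ++ d1 b) t.

(** Der_0(L, V): derivations with d(L_p) in V_p *)
Definition Der0 (Gam : R -> Prop) (s : R) (d : B -> VecV) : Prop :=
  derivation Gam s d /\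
  forall b, valid Gam s b -> forall u w,
    coefV (d b) (u, w) <> C0 -> bx u + bx w = bx b.

Definition nontriv_add_subgroup (Gam : R -> Prop) : Prop :=
  Gam 0 /\ (forall x y, Gam x -> Gam y -> Gam (x + y)) /\
  (forall x, Gam x -> Gam (- x)) /\ (exists g, Gam g /\ g <> 0).

(* Main.v *)
Require Import Defs.
From Stdlib Require Import Reals List Lia Lra FinFun Classical.
Open Scope R_scope.

Definition prc (b : bool) (z : Defs.C) : R := if b then re z else im z.

Lemma pr_add b x y : prc b (Cadd x y) = prc b x + prc b y.
Proof. destruct b; reflexivity. Qed.
Lemma pr_C0 b : prc b C0 = 0.
Proof. destruct b; reflexivity. Qed.

Lemma coef_app_pr {T} dec (v w : Fs T) t b :
  prc b (coef dec (v ++ w) t) = prc b (coef dec v t) + prc b (coef dec w t).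
Proof.
  induction v as [|[c x] v IH]; simpl.
  - rewrite pr_C0; ring.
  - destruct (dec x t); [rewrite !pr_add, IH; ring | exact IH].
Qed.

Lemma coef_scale {T} dec (c : Defs.C) (v : Fs T) t :
  coef dec (scale c v) t = Cmul c (coef dec v t).
Proof.
  induction v as [|[c' x] v IH]; simpl.
  - unfold Cmul, C0; simpl; f_equal; ring.
  - destruct (dec x t); [rewrite IH | exact IH].
    destruct c, c', (coef dec v t); unfold Cmul, Cadd; simpl; f_equal; ring.
Qed.

Lemma pr_mul_real b c x : im c = 0 -> prc b (Cmul c x) = re c * prc b x.
Proof. intro H; destruct b; simpl; rewrite H; ring. Qed.

Definition beta (k : kind) : R := match k with KL | KI => 1 | KG | KH => / 2 end.
Definition kc (p : R) (a : B) : R := beta (bk a) * p - bx a.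
Definition dn (p : R) (a : B) : B := mkB (bk a) (bx a - p).

Lemma brL p a : br (mkB KL p) a = (RtoC (kc p a), mkB (bk a) (p + bx a)) :: nil.
Proof.
  destruct a as [[] q]; unfold br, kc, beta; simpl; unfold RtoC; do 3 f_equal; field.
Qed.

Definition actR (p : R) (g : B * B -> R) (t : B * B) : R :=
  kc p (dn p (fst t)) * g (dn p (fst t), snd t) + kc p (dn p (snd t)) * g (fst t, dn p (snd t)).

Lemma up_iff1 p (a bb u w : B) :
  (mkB (bk a) (p + bx a), bb) = (u, w) <-> (a, bb) = (dn p u, w).
Proof.
  destruct a as [ka xa], u as [ku xu]; unfold dn; simpl; split; intro H; inversion H; subst.
  - f_equal; f_equal; ring.
  - f_equal; f_equal; ring.
Qed.
Lemma up_iff2 p (a bb u w : B) :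
  (a, mkB (bk bb) (p + bx bb)) = (u, w) <-> (a, bb) = (u, dn p w).
Proof.
  destruct bb as [ka xa], w as [ku xu]; unfold dn; simpl; split; intro H; inversion H; subst.
  - f_equal; f_equal; ring.
  - f_equal; f_equal; ring.
Qed.

Lemma act_cons x ct v : act x (ct :: v) =
  scale (fst ct) (tensor (br x (fst (snd ct))) ((Defs.C1, snd (snd ct)) :: nil) ++
       scale (Csign (par x && par (fst (snd ct)))) (tensor ((Defs.C1, fst (snd ct)) :: nil) (br x (snd (snd ct))))) ++ act x v.
Proof. reflexivity. Qed.

Opaque BB_eq_dec.
Lemma act_pr b p v u w :
  prc b (coefV (act (mkB KL p) v) (u, w)) = actR p (fun t => prc b (coefV v t)) (u, w).
Proof.
  induction v as [|[c [a bb]] v IH].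
  - unfold actR; simpl; rewrite pr_C0; ring.
  - rewrite act_cons. unfold coefV at 1. rewrite coef_app_pr. fold coefV. rewrite IH. clear IH.
    unfold coefV at 1. rewrite coef_scale. simpl fst. simpl snd.
    rewrite !brL. simpl.
    unfold actR; simpl.
    destruct (BB_eq_dec (a, bb) (dn p u, w)) as [E3|N3];
    destruct (BB_eq_dec (a, bb) (u, dn p w)) as [E4|N4];
    destruct (BB_eq_dec (mkB (bk a) (p + bx a), bb) (u, w)) as [E1|N1];
    destruct (BB_eq_dec (a, mkB (bk bb) (p + bx bb)) (u, w)) as [E2|N2];
    try (exfalso; apply N1; apply up_iff1; assumption);
    try (exfalso; apply N2; apply up_iff2; assumption);
    try (exfalso; apply N3; apply up_iff1; assumption);
    try (exfalso; apply N4; apply up_iff2; assumption);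
    try (injection E3 as Ha3 Hb3; rewrite <- Ha3);
    try (injection E4 as Ha4 Hb4; rewrite <- Hb4);
    destruct b; simpl; ring.
Qed.

Lemma ext_pr b (d : B -> VecV) p q t :
  prc b (coefV (ext d (br (mkB KL p) (mkB KL q))) t) = (p - q) * prc b (coefV (d (mkB KL (p + q))) t).
Proof.
  simpl. unfold coefV. rewrite coef_app_pr, coef_scale, pr_mul_real by reflexivity.
  simpl. rewrite pr_C0. ring.
Qed.

Lemma hom_rel Gam s pd di b p q u w :
  hom_derivation Gam s pd di -> Gam p -> Gam q ->
  (p - q) * prc b (coefV (di (mkB KL (p+q))) (u,w)) =
  actR p (fun t => prc b (coefV (di (mkB KL q)) t)) (u,w) -
  actR q (fun t => prc b (coefV (di (mkB KL p)) t)) (u,w).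
Proof.
  intros [_ [_ H]] Hp Hq.
  specialize (H (mkB KL p) (mkB KL q) Hp Hq (u,w)).
  apply (f_equal (prc b)) in H. rewrite ext_pr in H. rewrite H.
  unfold coefV at 1. rewrite coef_app_pr, !coef_scale.
  replace (pd && par (mkB KL p))%bool with false by (destruct pd; reflexivity).
  replace (par (mkB KL q) && xorb pd (par (mkB KL p)))%bool with false by reflexivity.
  rewrite !pr_mul_real by (simpl; ring). fold coefV. rewrite !act_pr. simpl. ring.
Qed.

Lemma actR_ext p g g1 g2 t :
  (forall t, g t = g1 t + g2 t) -> actR p g t = actR p g1 t + actR p g2 t.
Proof. intro H; unfold actR; rewrite !H; ring. Qed.

Lemma actR_zero p g t : (forall t, g t = 0) -> actR p g t = 0.
Proof. intro H; unfold actR; rewrite !H; ring. Qed.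

Lemma der_rel Gam s d b p q u w :
  (forall x y, Gam x -> Gam y -> Gam (x + y)) ->
  derivation Gam s d -> Gam p -> Gam q ->
  (p - q) * prc b (coefV (d (mkB KL (p+q))) (u,w)) =
  actR p (fun t => prc b (coefV (d (mkB KL q)) t)) (u,w) -
  actR q (fun t => prc b (coefV (d (mkB KL p)) t)) (u,w).
Proof.
  intros Hadd [d0 [d1 [H0 [H1 Hs]]]] Hp Hq.
  assert (E : forall r, Gam r -> forall t, prc b (coefV (d (mkB KL r)) t) =
     prc b (coefV (d0 (mkB KL r)) t) + prc b (coefV (d1 (mkB KL r)) t)).
  { intros r Hr t. rewrite (Hs (mkB KL r) Hr t). unfold coefV. apply coef_app_pr. }
  rewrite (E _ (Hadd _ _ Hp Hq)).
  rewrite (actR_ext p _ _ _ _ (E q Hq)), (actR_ext q _ _ _ _ (E p Hp)).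
  pose proof (hom_rel Gam s false d0 b p q u w H0 Hp Hq).
  pose proof (hom_rel Gam s true d1 b p q u w H1 Hp Hq).
  lra.
Qed.

Lemma fin_pr b (v : VecV) t : prc b (coefV v t) <> 0 -> In t (map snd v).
Proof.
  induction v as [|[c x] v IH]; simpl.
  - rewrite pr_C0; tauto.
  - unfold coefV in *; simpl.
    destruct (BB_eq_dec x t); [left; assumption|].
    intro H; right; apply IH, H.
Qed.

Lemma pigeon {T} (f : nat -> T) (l : list T) :
  (forall i j, f i = f j -> i = j) -> (forall i, In (f i) l) -> False.
Proof.
  intros Hi Hin.
  assert (ND : NoDup (map f (seq 0 (S (length l))))).
  { apply Injective_map_NoDup; [exact Hi | apply seq_NoDup]. }
  pose proof (NoDup_incl_length (l:=map f (seq 0 (S (length l)))) (l':=l) ND) as Hl.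
  assert (incl (map f (seq 0 (S (length l)))) l).
  { intros x Hx. apply in_map_iff in Hx. destruct Hx as [i [<- _]]. apply Hin. }
  specialize (Hl H). rewrite length_map, length_seq in Hl. lia.
Qed.

Definition pt (k1 k2 : kind) (x y : R) : B * B := (mkB k1 x, mkB k2 y).

Lemma actR_pt p g k1 k2 x y :
  actR p g (pt k1 k2 x y) = (beta k1 * p - (x - p)) * g (pt k1 k2 (x - p) y)
                          + (beta k2 * p - (y - p)) * g (pt k1 k2 x (y - p)).
Proof. reflexivity. Qed.

Lemma beta_pos k : / 2 <= beta k.
Proof. destruct k; simpl; lra. Qed.
Lemma beta_mixed k1 k2 : beta k1 <> beta k2 -> beta k1 + beta k2 = 3 / 2.
Proof. destruct k1, k2; simpl; intro H; try (exfalso; apply H; reflexivity); lra. Qed.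

Lemma Gam_nat (Gam : R -> Prop) eps :
  Gam 0 -> (forall x y, Gam x -> Gam y -> Gam (x + y)) -> Gam eps ->
  forall n, Gam (INR n * eps).
Proof.
  intros H0 Ha He n; induction n.
  - simpl. replace (0 * eps) with 0 by ring. exact H0.
  - rewrite S_INR. replace ((INR n + 1) * eps) with (INR n * eps + eps) by ring. auto.
Qed.

Lemma dn0 u : dn 0 u = u.
Proof. destruct u; unfold dn; simpl; f_equal; ring. Qed.

Section Core.
Variable Gam : R -> Prop.
Variable eps : R.
Variable cd : R -> B * B -> R.
Variable lst : R -> list (B * B).
Hypothesis H0 : Gam 0.
Hypothesis Hadd : forall x y, Gam x -> Gam y -> Gam (x + y).
Hypothesis Hneg : forall x, Gam x -> Gam (- x).
Hypothesis Heps : Gam eps.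
Hypothesis Hpos : 0 < eps.
Hypothesis Hrel : forall p q, Gam p -> Gam q -> forall t,
  (p - q) * cd (p + q) t = actR p (cd q) t - actR q (cd p) t.
Hypothesis Hfin : forall p t, cd p t <> 0 -> In t (lst p).
Hypothesis Hgr : forall p u w, Gam p -> cd p (u, w) <> 0 -> bx u + bx w = p.
Hypothesis Hz : forall t, cd eps t = 0.

Lemma killW P : Gam P -> forall t, actR P (cd 0) t = 0.
Proof.
  intros HP [u w].
  pose proof (Hrel 0 P H0 HP (u, w)) as E.
  rewrite Rplus_0_l in E.
  assert (A : actR 0 (cd P) (u, w) = - P * cd P (u, w)).
  { unfold actR; simpl fst; simpl snd. rewrite !dn0. unfold kc.
    destruct (Req_dec (cd P (u, w)) 0) as [Z|NZ].
    - rewrite Z; ring.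
    - pose proof (Hgr P u w HP NZ). replace P with (bx u + bx w) at 3 by exact H. ring. }
  lra.
Qed.

Lemma dn_up p a : dn p (mkB (bk a) (p + bx a)) = a.
Proof. destruct a; unfold dn; simpl; f_equal; ring. Qed.

Lemma W0 : forall t, cd 0 t = 0.
Proof.
  intros [a b]. destruct (Req_dec (cd 0 (a, b)) 0) as [Z|NZ]; [exact Z|exfalso].
  destruct (INR_unbounded (2 * Rabs (bx a) / eps)) as [N HN].
  assert (HN' : INR N * eps > 2 * Rabs (bx a)).
  { apply (Rmult_gt_compat_r eps) in HN; [|lra].
    unfold Rdiv in HN. rewrite Rmult_assoc, Rinv_l in HN; lra. }
  pose (f := fun k : nat => (mkB (bk a) (INR (N + k) * eps + bx a), dn (INR (N + k) * eps) b)).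
  apply (pigeon f (lst 0)).
  - intros i j H. unfold f in H. injection H as H1 H2.
    apply Nat.add_cancel_l with N. apply INR_eq.
    apply Rmult_eq_reg_r with eps; lra.
  - intro k. apply Hfin. unfold f.
    set (p := INR (N + k) * eps).
    assert (Hp : p >= INR N * eps).
    { unfold p. apply Rmult_ge_compat_r; [lra|]. apply Rle_ge, le_INR; lia. }
    pose proof (killW p (Gam_nat Gam eps H0 Hadd Heps (N + k)) (mkB (bk a) (p + bx a), b)) as E.
    unfold actR in E; simpl fst in E; simpl snd in E. rewrite dn_up in E.
    assert (Hk : kc p a > 0).
    { unfold kc. pose proof (beta_pos (bk a)). pose proof (Rle_abs (bx a)).
      pose proof (Rabs_pos (bx a)). nra. }
    intro Z'. rewrite Z' in E. rewrite Rmult_0_r, Rplus_0_r in E.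
    apply Rmult_integral in E. destruct E; lra.
Qed.

Lemma Ekill : forall t, actR eps (cd (-eps)) t = 0.
Proof.
  intro t. pose proof (Hrel eps (-eps) Heps (Hneg eps Heps) t) as H.
  replace (eps + - eps) with 0 in H by ring. rewrite W0 in H.
  rewrite (actR_zero (-eps) (cd eps) t Hz) in H. lra.
Qed.

Lemma G2 : Gam (2 * eps).
Proof. replace (2 * eps) with (eps + eps) by ring. auto. Qed.

Lemma Zrel : forall t, actR (-eps) (cd (2 * eps)) t = actR (2 * eps) (cd (-eps)) t.
Proof.
  intro t. pose proof (Hrel (-eps) (2 * eps) (Hneg eps Heps) G2 t) as H.
  replace (- eps + 2 * eps) with eps in H by ring. rewrite Hz in H. lra.
Qed.

Lemma Estep k1 k2 x y :
  (beta k1 * eps - (x - eps)) * cd (-eps) (pt k1 k2 (x - eps) y)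
  + (beta k2 * eps - (y - eps)) * cd (-eps) (pt k1 k2 x (y - eps)) = 0.
Proof. rewrite <- actR_pt. apply Ekill. Qed.

Lemma up_all k1 k2 x y : cd (-eps) (pt k1 k2 x y) <> 0 ->
  (forall k, x + INR k * eps <> beta k1 * eps) -> False.
Proof.
  intros NZ Hk.
  pose (f := fun k : nat => pt k1 k2 (x + INR k * eps) (y - INR k * eps)).
  apply (pigeon f (lst (-eps))).
  - intros i j H. unfold f, pt in H. injection H as H1 H2.
    apply INR_eq. apply Rmult_eq_reg_r with eps; lra.
  - intro k. apply Hfin. unfold f. induction k.
    + simpl INR. replace (x + 0 * eps) with x by ring. replace (y - 0 * eps) with y by ring. exact NZ.
    + pose proof (Estep k1 k2 (x + INR (S k) * eps) (y - INR k * eps)) as E.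
      replace (x + INR (S k) * eps - eps) with (x + INR k * eps) in E by (rewrite S_INR; ring).
      replace (y - INR k * eps - eps) with (y - INR (S k) * eps) in E by (rewrite S_INR; ring).
      intro Z. rewrite Z, Rmult_0_r, Rplus_0_r in E.
      apply Rmult_integral in E. destruct E as [E|E]; [|contradiction].
      apply (Hk k). lra.
Qed.

Lemma up_reach k1 k2 x y k : cd (-eps) (pt k1 k2 x y) <> 0 ->
  x + INR k * eps = beta k1 * eps ->
  cd (-eps) (pt k1 k2 (x + INR k * eps) (y - INR k * eps)) <> 0.
Proof.
  intros NZ Hk.
  assert (forall j, (j <= k)%nat -> cd (-eps) (pt k1 k2 (x + INR j * eps) (y - INR j * eps)) <> 0).
  { induction j; intro Hj.
    - simpl INR. replace (x + 0 * eps) with x by ring. replace (y - 0 * eps) with y by ring. exact NZ.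
    - pose proof (Estep k1 k2 (x + INR (S j) * eps) (y - INR j * eps)) as E.
      replace (x + INR (S j) * eps - eps) with (x + INR j * eps) in E by (rewrite S_INR; ring).
      replace (y - INR j * eps - eps) with (y - INR (S j) * eps) in E by (rewrite S_INR; ring).
      assert (Hlt : INR j < INR k) by (apply lt_INR; lia).
      intro Z. rewrite Z, Rmult_0_r, Rplus_0_r in E.
      apply Rmult_integral in E. destruct E as [E|E]; [nra|].
      apply (IHj ltac:(lia)); exact E. }
  apply H; lia.
Qed.

Lemma above k1 k2 x y m : x = beta k1 * eps -> (1 <= m)%nat ->
  cd (-eps) (pt k1 k2 (x + INR m * eps) (y - INR m * eps)) = 0.
Proof.
  intros Hx Hm. destruct (Req_dec (cd (-eps) (pt k1 k2 (x + INR m * eps) (y - INR m * eps))) 0) as [Z|NZ]; [exact Z|].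
  exfalso. apply (up_all _ _ _ _ NZ). intros k Hk.
  assert (1 <= INR m) by (apply (le_INR 1); lia). pose proof (pos_INR k). nra.
Qed.

Lemma Gneg : Gam (- eps).
Proof. auto. Qed.

Lemma mainU : forall t, cd (-eps) t = 0.
Proof.
  intros [[k1 x0] [k2 y0]]. change (mkB k1 x0, mkB k2 y0) with (pt k1 k2 x0 y0).
  destruct (Req_dec (cd (-eps) (pt k1 k2 x0 y0)) 0) as [Z|NZ]; [exact Z|exfalso].
  pose proof (Hgr (-eps) _ _ Gneg NZ) as Hsum; simpl in Hsum.
  destruct (classic (exists k, x0 + INR k * eps = beta k1 * eps)) as [[k Hk]|Hn].
  2:{ apply (up_all _ _ _ _ NZ). intros k Hk. apply Hn; exists k; exact Hk. }
  pose proof (up_reach _ _ _ _ _ NZ Hk) as HT.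
  set (xT := x0 + INR k * eps) in *. set (yT := y0 - INR k * eps) in *.
  assert (HyT : yT = - eps - beta k1 * eps) by (unfold yT; fold xT in Hk; unfold xT in Hk; lra).
  clearbody xT yT.
  pose proof (beta_pos k1) as Hb1. pose proof (beta_pos k2) as Hb2.
  destruct (Req_dec (beta k1) (beta k2)) as [Eb|Nb].
  -
    assert (Rstep : forall j : nat,
      cd (2 * eps) (pt k1 k2 (xT + (3 + INR j) * eps) (yT - INR j * eps)) <> 0 ->
      cd (2 * eps) (pt k1 k2 (xT + (3 + INR (S j)) * eps) (yT - INR (S j) * eps)) <> 0).
    { intros j NZj Zj.
      pose proof (Zrel (pt k1 k2 (xT + (3 + INR j) * eps) (yT - INR (S j) * eps))) as E.
      rewrite !actR_pt in E.
      replace (xT + (3 + INR j) * eps - - eps) with (xT + (3 + INR (S j)) * eps) in E by (rewrite S_INR; ring).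
      replace (yT - INR (S j) * eps - - eps) with (yT - INR j * eps) in E by (rewrite S_INR; ring).
      replace (xT + (3 + INR j) * eps - 2 * eps) with (xT + INR (S j) * eps) in E by (rewrite S_INR; ring).
      replace (xT + (3 + INR j) * eps) with (xT + INR (S (S (S j))) * eps) in E by (rewrite !S_INR; ring).
      replace (yT - INR (S j) * eps - 2 * eps) with (yT - INR (S (S (S j))) * eps) in E by (rewrite !S_INR; ring).
      rewrite (above _ _ xT yT (S j) Hk ltac:(lia)) in E.
      rewrite (above _ _ xT yT (S (S (S j))) Hk ltac:(lia)) in E.
      replace (xT + INR (S (S (S j))) * eps) with (xT + (3 + INR j) * eps) in E by (rewrite !S_INR; ring).
      rewrite Zj in E.
      pose proof (pos_INR j).
      assert (Hc : beta k2 * - eps - (yT - INR j * eps) = (1 + INR j) * eps) by (rewrite HyT, <- Eb; ring).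
      rewrite Hc in E.
      assert (E' : (1 + INR j) * eps * cd (2 * eps) (pt k1 k2 (xT + (3 + INR j) * eps) (yT - INR j * eps)) = 0) by lra.
      apply Rmult_integral in E'. destruct E' as [E'|E']; [nra|contradiction]. }
    assert (Z0 : cd (2 * eps) (pt k1 k2 (xT + 3 * eps) yT) = 0).
    { destruct (Req_dec (cd (2 * eps) (pt k1 k2 (xT + 3 * eps) yT)) 0) as [Z0|NZ0]; [exact Z0|exfalso].
      pose (f := fun j : nat => pt k1 k2 (xT + (3 + INR j) * eps) (yT - INR j * eps)).
      apply (pigeon f (lst (2 * eps))).
      - intros i j H. unfold f, pt in H. injection H as H1 H2.
        apply INR_eq. apply Rmult_eq_reg_r with eps; lra.
      - intro j. apply Hfin. unfold f. induction j.
        + simpl INR. replace (xT + (3 + 0) * eps) with (xT + 3 * eps) by ring.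
          replace (yT - 0 * eps) with yT by ring. exact NZ0.
        + apply Rstep; exact IHj. }
    pose proof (Zrel (pt k1 k2 (xT + 2 * eps) yT)) as E.
    rewrite !actR_pt in E.
    replace (xT + 2 * eps - - eps) with (xT + 3 * eps) in E by ring.
    rewrite Z0 in E.
    replace (xT + 2 * eps - 2 * eps) with xT in E by ring.
    replace (xT + 2 * eps) with (xT + INR 2 * eps) in E by (simpl; ring).
    replace (yT - 2 * eps) with (yT - INR 2 * eps) in E by (simpl; ring).
    rewrite (above _ _ xT yT 2 Hk ltac:(lia)) in E.
    assert (Hc : beta k2 * - eps - (yT - - eps) = 0) by (rewrite HyT, <- Eb; ring).
    rewrite Hc in E.
    assert (E' : (beta k1 * (2 * eps) - xT) * cd (- eps) (pt k1 k2 xT yT) = 0) by lra.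
    apply Rmult_integral in E'. destruct E' as [E'|E']; [nra|contradiction].
  - pose proof (beta_mixed _ _ Nb) as Hm.
    pose (f := fun m : nat => pt k1 k2 (xT - INR m * eps) (yT + INR m * eps)).
    apply (pigeon f (lst (- eps))).
    + intros i j H. unfold f, pt in H. injection H as H1 H2.
      apply INR_eq. apply Rmult_eq_reg_r with eps; lra.
    + intro m. apply Hfin. unfold f. induction m.
      * simpl INR. replace (xT - 0 * eps) with xT by ring.
        replace (yT + 0 * eps) with yT by ring. exact HT.
      * pose proof (Estep k1 k2 (xT - INR m * eps) (yT + INR (S m) * eps)) as E.
        replace (xT - INR m * eps - eps) with (xT - INR (S m) * eps) in E by (rewrite S_INR; ring).
        replace (yT + INR (S m) * eps - eps) with (yT + INR m * eps) in E by (rewrite S_INR; ring).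
        intro Zm. rewrite Zm, Rmult_0_r, Rplus_0_l in E.
        apply Rmult_integral in E. destruct E as [E|E]; [|contradiction].
        assert (Hne : INR m <> 5 / 2).
        { destruct (Compare_dec.le_lt_dec m 2) as [Hl|Hl].
          - apply le_INR in Hl. simpl in Hl. lra.
          - assert (H3 : (3 <= m)%nat) by lia. apply le_INR in H3. simpl in H3. lra. }
        apply Hne. apply Rmult_eq_reg_r with eps; [|lra]. rewrite HyT in E. nra.
Qed.

End Core.

Theorem mainTheorem9 (Gam : R -> Prop) (s eps : R) (d : B -> VecV) :
  nontriv_add_subgroup Gam -> Gam (2 * s) ->
  Gam eps -> 0 < eps ->
  Der0 Gam s d ->
  (forall t, coefV (d (mkB KL eps)) t = C0) ->
  forall t, coefV (d (mkB KL (- eps))) t = C0.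
Proof.
  intros [HG0 [Hadd [Hneg _]]] _ Heps Hpos [Hder Hgrad] Hz t.
  assert (Hb : forall b, prc b (coefV (d (mkB KL (- eps))) t) = 0).
  { intro b.
    apply (mainU Gam eps (fun p t => prc b (coefV (d (mkB KL p)) t))
             (fun p => map snd (d (mkB KL p))) HG0 Hadd Hneg Heps Hpos).
    - intros p q Hp Hq [u w]. apply (der_rel Gam s d b p q u w Hadd Hder Hp Hq).
    - intros p t' H. apply fin_pr with b; exact H.
    - intros p u w Hp H. apply (Hgrad (mkB KL p) Hp u w). intro E; rewrite E in H; apply H, pr_C0.
    - intro t'. simpl. rewrite Hz. apply pr_C0. }
  pose proof (Hb true) as Hr. pose proof (Hb false) as Hi.
  destruct (coefV (d (mkB KL (- eps))) t) as [r i]. simpl in Hr, Hi. subst. reflexivity.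
Qed.
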